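(* Let $G$ be a finite group and $p$ a prime dividing $|G|$. If the Sylow $p$-subgroups of $G$ are abelian, then $\mathcal{B}_p(G)\subseteq\mathcal{S}_p(G)$ is a strong deformation retract. Moreover, it is an equivariant strong deformation retract of $\mathcal{S}_p(G)$.
   Context: $\mathcal{S}_p(G)$ is the poset of non-trivial $p$-subgroups of $G$ ordered by inclusion, with $G$ acting by conjugation; $\mathcal{B}_p(G)=\{P\in\mathcal{S}_p(G):P=\mathcal{O}_p(N_G(P))\}$, where $\mathcal{O}_p(H)$ is the largest normal $p$-subgroup of $H$. Finite posets are regarded as finite $T_0$ spaces whose open sets are the down-sets; strong deformation retract refers to this topology, and equivariant means the retraction and homotopy are $G$-equivariant. *)

(* Defs.v *)
From HB Require Import structures.
From Stdlib Require Import Reals.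
From mathcomp Require Import all_boot all_fingroup all_solvable.

Set Implicit Arguments.
Unset Strict Implicit.
Unset Printing Implicit Defensive.

(* A finite poset is a subset X of a finite type T with order [le];
   its open sets are the down-sets of X. *)
Definition is_open_in (T : finType) (le : rel T) (X U : {set T}) : Prop :=
  U \subset X /\
  forall x y, x \in U -> y \in X -> le y x -> y \in U.

Definition fcontinuous (T : finType) (le : rel T) (X Y : {set T}) (f : T -> T)
  : Prop :=
  (forall x, x \in X -> f x \in Y) /\
  forall V, is_open_in le Y V -> is_open_in le X [set x in X | f x \in V].

Definition unit_interval (t : R) : Prop := Rle (IZR 0) t /\ Rle t (IZR 1).

(* Since the
   minimal open neighbourhood of x in X is the down-set of x, a set W is open
   in X x [0,1] iff every (x,t) in W has a neighbourhood
   (down-set of x) x ((t-eps,t+eps) cap [0,1]) contained in W. *)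
Definition homotopy_continuous (T : finType) (le : rel T) (X : {set T})
  (H : T -> R -> T) : Prop :=
  (forall x t, x \in X -> unit_interval t -> H x t \in X) /\
  forall V, is_open_in le X V ->
    forall x t, x \in X -> unit_interval t -> H x t \in V ->
      exists eps : R, Rlt (IZR 0) eps /\
        forall y s, y \in X -> le y x -> unit_interval s ->
          Rlt (Rabs (Rminus s t)) eps -> H y s \in V.

Definition strong_deformation_retract (T : finType) (le : rel T)
  (X A : {set T}) : Prop :=
  A \subset X /\
  exists r : T -> T,
    fcontinuous le X A r /\ (forall a, a \in A -> r a = a) /\
    exists H : T -> R -> T,
      homotopy_continuous le X H /\
      (forall x, x \in X -> H x (IZR 0) = x) /\
      (forall x, x \in X -> H x (IZR 1) = r x) /\
      (forall a t, a \in A -> unit_interval t -> H a t = a).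

Definition equivariant_sdr (T : finType) (le : rel T) (X A : {set T})
  (gT : finGroupType) (G : {set gT}) (act : T -> gT -> T) : Prop :=
  A \subset X /\
  exists r : T -> T,
    fcontinuous le X A r /\ (forall a, a \in A -> r a = a) /\
    (forall x g, x \in X -> g \in G -> r (act x g) = act (r x) g) /\
    exists H : T -> R -> T,
      homotopy_continuous le X H /\
      (forall x, x \in X -> H x (IZR 0) = x) /\
      (forall x, x \in X -> H x (IZR 1) = r x) /\
      (forall a t, a \in A -> unit_interval t -> H a t = a) /\
      (forall x g t, x \in X -> g \in G -> unit_interval t ->
         H (act x g) t = act (H x t) g).

Definition subset_le (gT : finGroupType) : rel {set gT} :=
  fun A B => A \subset B.

Definition Sp (gT : finGroupType) (p : nat) (G : {set gT}) : {set {set gT}} :=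
  [set H : {set gT} | [&& group_set H, H \subset G, pgroup p H & (H != 1)%g]].

Definition Bp (gT : finGroupType) (p : nat) (G : {set gT}) : {set {set gT}} :=
  [set H in Sp p G | H == 'O_p('N_G(H))%g].

Definition conj_act (gT : finGroupType) (H : {set gT}) (g : gT) : {set gT} :=
  (H :^ g)%g.

(* Main.v *)
Require Import Defs.
From Stdlib Require Import Reals Lra.
From mathcomp Require Import all_boot all_fingroup all_solvable.

Set Implicit Arguments.
Unset Strict Implicit.
Unset Printing Implicit Defensive.

Section Retr.
Local Open Scope group_scope.
Variables (gT : finGroupType) (G : {group gT}) (p : nat).
Hypothesis abS : forall P : {group gT}, P \in ('Syl_p(G))%g -> abelian P.

Definition rr (P : {set gT}) : {set gT} := 'O_p('C_G(P))%g.

Lemma abel_sup (P : {group gT}) : P \subset G -> pgroup p P ->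
  exists S : {group gT}, [/\ pHall p G S, abelian S & P \subset S].
Proof.
move=> sPG pP; have [S sylS sPS] := Sylow_superset sPG pP.
exists S; split=> //; apply: abS; by rewrite inE.
Qed.

Lemma sub_rr (P : {group gT}) : P \subset G -> pgroup p P -> P \subset rr P.
Proof.
move=> sPG pP; have [S [sylS aS sPS]] := abel_sup sPG pP.
have aP : abelian P by apply: abelianS aS.
apply: pcore_max => //; rewrite /normal subsetI sPG /=.
apply/andP; split; first exact: aP.
by rewrite cents_norm // subsetIr.
Qed.

Lemma rr_mono (P Q : {group gT}) : P \subset Q -> Q \subset G -> pgroup p Q ->
  rr P \subset rr Q.
Proof.
move=> sPQ sQG pQ; have [S [sylS aS sQS]] := abel_sup sQG pQ.
have sPS : P \subset S by apply: subset_trans sQS.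
have sSC : S \subset 'C_G(P) by rewrite subsetI (pHall_sub sylS) sub_abelian_cent.
have sylS' : pHall p ('C_G(P)) S by apply: pHall_subl sSC (subsetIl _ _) sylS.
have rS : rr P \subset S by apply: pcore_sub_Hall.
have rC : rr P \subset 'C_G(Q).
  rewrite subsetI (subset_trans (pcore_sub _ _) (subsetIl _ _)).
  exact: sub_abelian_cent2 aS rS sQS.
apply: pcore_max; first exact: pcore_pgroup.
apply: normalS rC _ (pcore_normal _ _).
exact: setIS (centS sPQ).
Qed.

Lemma rr_Bp (P : {set gT}) : P \in Sp p G -> rr P \in Bp p G.
Proof.
rewrite inE => /and4P[gP sPG pP nP].
have sPr := sub_rr (P := Group gP) sPG pP.
have srG : rr P \subset G := subset_trans (pcore_sub _ _) (subsetIl _ _).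
have prr : pgroup p ((rr P)) := pcore_pgroup _ _.
have SP : rr P \in Sp p G.
  rewrite inE srG prr groupP /=; apply: contra nP => /eqP r1.
  have : (Group gP) \subset [1] by rewrite /= -r1.
  by rewrite subG1.
rewrite inE SP /= eqEsubset; apply/andP; split.
  apply: pcore_max => //; by rewrite normal_subnorm.
set R := 'O_p(_)%g.
have sRG : R \subset G := subset_trans (pcore_sub _ _) (subsetIl _ _).
have pR : pgroup p R := pcore_pgroup _ _.
have [S [sylS aS sRS]] := abel_sup sRG pR.
have sQR : rr P \subset R by apply: pcore_max => //; rewrite normal_subnorm.
have sPS : P \subset S by apply: subset_trans sRS; apply: subset_trans sQR.
have sRC : R \subset 'C_G(P) by rewrite subsetI sRG (sub_abelian_cent2 aS sRS sPS).
apply: pcore_max => //; apply: normalS sRC _ (pcore_normal _ _).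
by rewrite subsetI subsetIl normal_norm // pcore_normal.
Qed.

Lemma rr_fix (a : {set gT}) : a \in Bp p G -> rr a = a.
Proof.
rewrite !inE => /andP[/and4P[ga saG pa _] Ea].
apply/eqP; rewrite eqEsubset (sub_rr (P := Group ga) saG pa) andbT.
suff : rr a \subset 'O_p('N_G(a)) by rewrite -(eqP Ea).
apply: pcore_max; first exact: pcore_pgroup.
apply: char_normal_trans (pcore_char _ _) _.
exact: subcent_normal.
Qed.

Lemma rr_conj (P : {set gT}) g : g \in G -> rr (P :^ g) = rr P :^ g.
Proof.
move=> gG; rewrite /rr centJ -{1}(conjGid gG) -conjIg.
exact: pcoreJ.
Qed.

End Retr.

Section Generic.
Variables (T : finType) (le : rel T) (X A : {set T}) (r : T -> T).
Hypotheses (le_trans : forall x y z, le x y -> le y z -> le x z)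
  (rXA : forall x, x \in X -> r x \in A) (sAX : A \subset X)
  (rmono : forall x y, x \in X -> y \in X -> le y x -> le (r y) (r x))
  (rext : forall x, x \in X -> le x (r x)).

Definition Hf (x : T) (t : R) : T := if Rlt_dec t (IZR 1) then x else r x.

Lemma r_cont : fcontinuous le X A r.
Proof.
split=> // V [sVA oV]; split; first by apply/subsetP=> x; rewrite inE => /andP[].
move=> x y; rewrite !inE => /andP[xX rxV] yX lyx; rewrite yX /=.
apply: (oV (r x)) => //; [exact: rXA | exact: rmono].
Qed.

Lemma H_cont : homotopy_continuous le X Hf.
Proof.
have rX : forall x, x \in X -> r x \in X by move=> x /rXA; apply: (subsetP sAX).
split.
  move=> x t xX _; unfold Hf; destruct (Rlt_dec t (IZR 1)); [exact xX | exact: rX].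
move=> V [sVX oV] x t xX [t0 t1]; unfold Hf; destruct (Rlt_dec t (IZR 1)) as [tlt|tlt]; move=> HV.
  exists (Rminus (IZR 1) t); split; first lra.
  move=> y s yX lyx _ hs; unfold Hf; destruct (Rlt_dec s (IZR 1)) as [slt|slt].
    exact: (oV x).
  exfalso; apply: slt; have := Rle_abs (Rminus s t); lra.
exists (IZR 1); split; first lra.
move=> y s yX lyx _ _; unfold Hf; destruct (Rlt_dec s (IZR 1)).
  by apply: (oV (r x)) => //; apply: le_trans lyx (rext xX).
by apply: (oV (r x)) => //; [apply: rX | apply: rmono].
Qed.

Lemma H0 x : Hf x (IZR 0) = x.
Proof. unfold Hf; destruct (Rlt_dec (IZR 0) (IZR 1)) as [h|h]; [by [] | exfalso; apply: h; lra]. Qed.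

Lemma H1 x : Hf x (IZR 1) = r x.
Proof. unfold Hf; destruct (Rlt_dec (IZR 1) (IZR 1)) as [h|h]; [exfalso; lra | by []]. Qed.

End Generic.

Theorem proposition5p2 (gT : finGroupType) (G : {group gT}) (p : nat) :
  prime p -> p %| #|G| ->
  (forall P : {group gT}, P \in ('Syl_p(G))%g -> abelian P) ->
  strong_deformation_retract (@subset_le gT) (Sp p G) (Bp p G) /\
  equivariant_sdr (@subset_le gT) (Sp p G) (Bp p G) G (@conj_act gT).
Proof.
move=> _ _ abS.
have sAX : Bp p G \subset Sp p G by apply/subsetP=> x; rewrite inE => /andP[].
have ltr : forall x y z : {set gT}, subset_le x y -> subset_le y z -> subset_le x z.
  by move=> x y z; apply: subset_trans.
have rXA : forall x, x \in Sp p G -> rr G p x \in Bp p G by move=> x; apply: rr_Bp.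
have rmono : forall x y, x \in Sp p G -> y \in Sp p G -> subset_le y x ->
    subset_le (rr G p y) (rr G p x).
  move=> x y; rewrite !inE => /and4P[gx sxG px _] /and4P[gy _ _ _] lyx.
  exact: (@rr_mono _ G p abS (Group gy) (Group gx)).
have rext : forall x, x \in Sp p G -> subset_le x (rr G p x).
  move=> x; rewrite inE => /and4P[gx sxG px _].
  exact: (@sub_rr _ G p abS (Group gx)).
have rfix : forall a, a \in Bp p G -> rr G p a = a by move=> a; apply: rr_fix.
have Hfix : forall a t, a \in Bp p G -> unit_interval t ->
    Hf (rr G p) a t = a.
  move=> a t aA _; unfold Hf; destruct (Rlt_dec t (IZR 1)); [by [] | exact: rfix].
split.
  split=> //; exists (rr G p); split; first exact: (r_cont rXA rmono).
  split=> //; exists (Hf (rr G p)); split; first exact: (H_cont ltr rXA sAX rmono rext).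
  by split=> [x _|]; [apply: H0 | split=> [x _|]; [apply: H1 | ]].
split=> //; exists (rr G p); split; first exact: (r_cont rXA rmono).
split=> //; split.
  by move=> x g _ gG; rewrite /conj_act rr_conj.
exists (Hf (rr G p)); split; first exact: (H_cont ltr rXA sAX rmono rext).
split; first by move=> x _; apply: H0.
split; first by move=> x _; apply: H1.
split=> //.
move=> x g t _ gG _; unfold Hf, conj_act; destruct (Rlt_dec t (IZR 1)); first by [].
by rewrite rr_conj.
Qed.
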